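(* Let $\mathrm{Lab}$ be a labelling system on a finite simplicial tree $T$. Then the union of the useful edges of $T$ (together with their endpoints) is connected, i.e. forms a subtree of $T$: every edge lying on the path in $T$ between two useful edges is useful.
   Context: A labelling system on a finite simplicial tree $T$ assigns to each vertex $v$ a subset $\mathrm{Lab}(v)\subset\{1,\dots,N\}$ such that (A) $\mathrm{Lab}(a)\cap\mathrm{Lab}(b)\subset\mathrm{Lab}(x)$ whenever $x$ is a vertex on the shortest path between vertices $a,b$, and (B) $\bigcup_v\mathrm{Lab}(v)=\{1,\dots,N\}$. Removing the open edge $e$ leaves two closed connected components $T^+(e)$, $T^-(e)$. The edge $e$ is useless if $\bigcup_{v\in T^+(e)}\mathrm{Lab}(v)$ or $\bigcup_{v\in T^-(e)}\mathrm{Lab}(v)$ equals $\{1,\dots,N\}$, and useful otherwise. *)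

(* Defs.v *)
From mathcomp Require Import all_boot.
Set Implicit Arguments. Unset Strict Implicit. Unset Printing Implicit Defensive.

(* A finite simple graph on a finType V is a symmetric irreflexive relation. *)

Definition walk (V : finType) (e : rel V) (x y : V) (p : seq V) : bool :=
  path e x p && (last x p == y).

Definition shortest_path (V : finType) (e : rel V) (a b : V) (p : seq V) : Prop :=
  walk e a b p /\ forall q, walk e a b q -> size p <= size q.

Definition connected_graph (V : finType) (e : rel V) : Prop :=
  forall x y : V, exists p, walk e x y p.

Definition acyclic (V : finType) (e : rel V) : Prop :=
  forall (x : V) (p : seq V), 2 <= size p -> uniq (x :: p) -> ~~ cycle e (x :: p).

Definition is_tree (V : finType) (e : rel V) : Prop :=
  [/\ symmetric e, irreflexive e, connected_graph e & acyclic e].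

(* Labelling system with labels in {0,...,N-1} ('I_N), standing for {1,...,N}. *)
Definition labelling_system (V : finType) (e : rel V) (N : nat)
    (Lab : V -> {set 'I_N}) : Prop :=
  (forall a b x p, shortest_path e a b p -> x \in a :: p ->
      Lab a :&: Lab b \subset Lab x)
  /\ \bigcup_(v : V) Lab v = [set: 'I_N].

Definition remove_edge (V : finType) (e : rel V) (u v : V) : rel V :=
  [rel x y | e x y && ~~ (((x == u) && (y == v)) || ((x == v) && (y == u)))].

Definition side (V : finType) (e : rel V) (u v : V) : {set V} :=
  [set x | connect (remove_edge e u v) u x].

Definition useful (V : finType) (e : rel V) (N : nat) (Lab : V -> {set 'I_N})
    (u v : V) : bool :=
  (\bigcup_(x in side e u v) Lab x != [set: 'I_N]) &&
  (\bigcup_(x in side e v u) Lab x != [set: 'I_N]).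

(* Main.v *)
Require Import Defs.
From mathcomp Require Import all_boot.
Set Implicit Arguments. Unset Strict Implicit. Unset Printing Implicit Defensive.

Section Aux.
Variable V : finType.
Implicit Types (e : rel V).

Lemma rem_sym e u v : remove_edge e u v =2 remove_edge e v u.
Proof. by move=> x y; rewrite /remove_edge /= [in RHS]orbC. Qed.

Lemma rem_symm e u v : symmetric e -> symmetric (remove_edge e u v).
Proof.
move=> Hs x y; rewrite /remove_edge /= Hs; congr (_ && ~~ _).
by rewrite orbC (andbC (y == u)) (andbC (y == v)).
Qed.

Lemma mem_zip2 (s t : seq V) x y : (x, y) \in zip s t -> (x \in s) && (y \in t).
Proof.
elim: s t => [|a s IH] [|b t] //=.
rewrite in_cons => /orP [/eqP [-> ->]|/IH /andP [H1 H2]].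
  by rewrite !in_cons !eqxx.
by rewrite !in_cons H1 H2 !orbT.
Qed.

Lemma sep e x y : is_tree e -> e x y -> ~~ connect (remove_edge e x y) x y.
Proof.
move=> [Hs Hi _ Hac] Hxy; apply/negP => /connectP [s Hp Hl].
case: (shortenP Hp) Hl => s' Hp' Hu _ Hl.
have Hsub : subrel (remove_edge e x y) e by move=> u w /andP [].
have Hpe := sub_path Hsub Hp'.
have Hsz : 2 <= size s'.
  case: s' Hp' Hpe Hu Hl => [|w [|w2 s'']] //=.
    by move=> _ _ _ Hl; move: Hxy; rewrite Hl (Hi x).
  move=> H1 _ _ H4; move: H1; rewrite andbT -H4 /remove_edge /= !eqxx /=; by rewrite andbF.
apply: (negP (Hac x s' Hsz Hu)).
by rewrite /cycle rcons_path Hpe -Hl Hs.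
Qed.

Lemma two_sides e a b : connected_graph e -> forall w,
  connect (remove_edge e a b) a w || connect (remove_edge e a b) b w.
Proof.
move=> Hc w; have [s /andP [Hp /eqP <-]] := Hc a w.
have H0 : connect (remove_edge e a b) a a || connect (remove_edge e a b) b a
  by rewrite connect0.
suff H : forall u, connect (remove_edge e a b) a u || connect (remove_edge e a b) b u ->
  path e u s -> connect (remove_edge e a b) a (last u s) || connect (remove_edge e a b) b (last u s).
  exact: H.
elim: s {Hp} => [|z s IH] u //= Hu /andP [Huz Hp]; apply: IH Hp.
case Hr: (remove_edge e a b u z).
  by case/orP: Hu => H; rewrite (connect_trans H (connect1 Hr)) ?orbT.
move: Hr; rewrite /remove_edge /= Huz /= => /negbFE /orP [] /andP [_ /eqP ->];
  by rewrite connect0 ?orbT.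
Qed.

Lemma avoid e x y u s : path e u s -> x \notin u :: s ->
  connect (remove_edge e x y) u (last u s).
Proof.
elim: s u => [|w s IH] u /=; first by rewrite connect0.
move=> /andP [Huw Hp]; rewrite !in_cons !negb_or => /and3P [Hxu Hxw Hxs].
apply: connect_trans (IH w Hp _); last by rewrite in_cons negb_or Hxw.
apply: connect1; rewrite /remove_edge /= Huw /= negb_or !negb_and.
by rewrite eq_sym Hxu [w == x]eq_sym Hxw orbT.
Qed.

Lemma onpath e p a x y : path e a p -> uniq (a :: p) ->
  (x, y) \in zip (a :: p) p ->
  [/\ connect (remove_edge e x y) a x,
      connect (remove_edge e x y) y (last a p) & e x y].
Proof.
elim: p a => [|z p IH] a //= /andP [Haz Hp] /andP [Ha Hu].
rewrite in_cons => /orP [/eqP [-> ->]|Hin].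
  split; [exact: connect0 | exact: avoid | by []].
have [H1 H2 H3] := IH z Hp Hu Hin.
split => //; apply: connect_trans H1; apply: connect1.
have /andP [Hx Hy] := mem_zip2 Hin.
rewrite /remove_edge /= Haz /= negb_or !negb_and.
have Hax : a != x by apply: contraNneq Ha => ->.
have Hay : a != y by apply: contraNneq Ha => ->; rewrite in_cons Hy orbT.
by rewrite Hax Hay.
Qed.

Lemma cut_loop e l a : path e a l -> a \in l ->
  exists q, (path e a q && (last a q == last a l)) /\ size q < size l.
Proof.
move=> Hp Hin; move: Hp; case/splitPr: Hin => s1 s2 Hp.
exists s2; rewrite last_cat /= eqxx andbT size_cat /= addnS ltnS leq_addl.
by move: Hp; rewrite cat_path /= => /and3P [].
Qed.

Lemma walk_shorten e p a : path e a p -> ~~ uniq (a :: p) ->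
  exists q, (path e a q && (last a q == last a p)) /\ size q < size p.
Proof.
elim: p a => [|z p IH] a //= /andP [Haz Hp].
rewrite negb_and negbK => /orP [Hin|Hn].
  by apply: (@cut_loop e (z :: p)) => //=; rewrite Haz.
have [q [/andP [Hq Hl] Hs]] := IH z Hp Hn.
by exists (z :: q); rewrite /= Haz Hq Hl.
Qed.

Lemma keyK e x y a b : is_tree e -> e x y -> connect (remove_edge e x y) x a ->
  forall z, connect (remove_edge e x y) y z -> connect (remove_edge e a b) y z.
Proof.
move=> Ht Hxy Hxa; have Hs := Ht; case: Hs => [Hsym _ _ _].
have HcS := sym_connect_sym (rem_symm x y Hsym).
suff H : forall s u, connect (remove_edge e x y) y u ->
    path (remove_edge e x y) u s -> connect (remove_edge e a b) u (last u s).
  by move=> z /connectP [s Hp ->]; apply: H; rewrite ?connect0.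
have Hna : ~~ connect (remove_edge e x y) y a.
  apply: contraNN (sep Ht Hxy) => Hya.
  by apply: connect_trans Hxa _; rewrite HcS.
elim=> [|w s IH] u Hyu /=; first by rewrite connect0.
move=> /andP [Huw Hp].
have Hyw : connect (remove_edge e x y) y w := connect_trans Hyu (connect1 Huw).
apply: connect_trans (IH w Hyw Hp); apply: connect1.
move: Huw; rewrite /remove_edge /= => /andP [-> _] /=.
apply/negP => /orP [] /andP [/eqP Hu /eqP Hw].
  by move: Hna; rewrite -Hu Hyu.
by move: Hna; rewrite -Hw Hyw.
Qed.

Lemma sideC e x y a b : is_tree e -> e x y -> connect (remove_edge e x y) x a ->
  (forall z, connect (remove_edge e x y) y z -> z \in side e a b) \/
  (forall z, connect (remove_edge e x y) y z -> z \in side e b a).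
Proof.
move=> Ht Hxy Hxa; have Hs := Ht; case: Hs => [_ _ Hc _].
case/orP: (two_sides a b Hc y) => Hy; [left|right] => z Hz;
  have Hk := keyK b Ht Hxy Hxa Hz; rewrite /side inE.
  exact: connect_trans Hy Hk.
rewrite (eq_connect (rem_sym e b a)); exact: connect_trans Hy Hk.
Qed.

Lemma union_ne N (Lab : V -> {set 'I_N}) (S T : {set V}) :
  (forall z, z \in S -> z \in T) ->
  \bigcup_(z in T) Lab z != setT -> \bigcup_(z in S) Lab z != setT.
Proof.
move=> HST; apply: contra => /eqP HS; rewrite eqEsubset subsetT /=.
apply/subsetP => i _; have : i \in \bigcup_(z in S) Lab z by rewrite HS inE.
by case/bigcupP => z Hz Hi; apply/bigcupP; exists z => //; apply: HST.
Qed.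

End Aux.

Theorem mainTheorem11 (V : finType) (e : rel V) (N : nat)
    (Lab : V -> {set 'I_N}) :
  is_tree e -> labelling_system e Lab ->
  forall a b c d : V, e a b -> e c d ->
    useful e Lab a b -> useful e Lab c d ->
  forall p : seq V, shortest_path e a c p ->
  forall x y : V, (x, y) \in zip (a :: p) p -> useful e Lab x y.
Proof.
move=> Ht _ a b c d Hab Hcd /andP [Uab Uba] /andP [Ucd Udc] p [Hw Hmin] x y Hxy.
have Ht' := Ht; case: Ht' => [Hsym _ _ _].
move/andP: Hw => [Hp /eqP Hl].
have Hu : uniq (a :: p).
  apply/negPn/negP => Hn; have [q [/andP [Hq Hql] Hs]] := walk_shorten Hp Hn.
  have := Hmin q; rewrite /walk Hq -Hl Hql => /(_ isT).
  by rewrite leqNgt Hs.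
have [Hax Hyc He] := onpath Hp Hu Hxy.
rewrite Hl in Hyc.
have HcS := sym_connect_sym (rem_symm x y Hsym).
have Hxa : connect (remove_edge e x y) x a by rewrite HcS.
have Hyc' : connect (remove_edge e y x) y c by rewrite (eq_connect (rem_sym e y x)).
have Hyx : e y x by rewrite Hsym.
rewrite /useful; apply/andP; split.
  have HX : forall z, z \in side e x y -> connect (remove_edge e y x) x z.
    by move=> z; rewrite inE (eq_connect (rem_sym e y x)).
  case: (sideC d Ht Hyx Hyc') => H.
    by apply: (@union_ne _ _ _ _ (side e c d)) Ucd => z /HX /H.
  by apply: (@union_ne _ _ _ _ (side e d c)) Udc => z /HX /H.
have HY : forall z, z \in side e y x -> connect (remove_edge e x y) y z.
  by move=> z; rewrite inE (eq_connect (rem_sym e x y)).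
case: (sideC b Ht He Hxa) => H.
  by apply: (@union_ne _ _ _ _ (side e a b)) Uab => z /HY /H.
by apply: (@union_ne _ _ _ _ (side e b a)) Uba => z /HY /H.
Qed.
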